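(* Let $(\mathbb{X},A)$ be a quantum graph. Then the eigenspaces of $D_A$ and of $D^A$ are invariant under the action of $\operatorname{Qut}(\mathbb{X},A)$; that is, the orthogonal projections onto the eigenspaces of $D_A$ (and of $D^A$) are intertwiners of the fundamental representation $U$ of $\operatorname{Qut}(\mathbb{X},A)$, i.e. they commute with $U$.
   Context: A finite quantum set $\mathbb{X}$ is a finite-dimensional C*-algebra $C(\mathbb{X})$ with its unique tracial positive functional $\psi$ such that, for $\langle x,y\rangle=\psi(x^*y)$ on $\ell^2(\mathbb{X}):=C(\mathbb{X})$, the multiplication $m$ satisfies $mm^*=\mathrm{id}$; $\eta$ is the unit. A quantum graph is $(\mathbb{X},A)$ with $A\bullet A=A=\bar A$, where $A\bullet B=m(A\otimes B)m^*$ and $\bar Af=(A(f^* ))^*$. The degree operators are $D_A=m(A\eta\otimes I_{\ell^2(\mathbb{X})})$ and $D^A=m(A^*\eta\otimes I_{\ell^2(\mathbb{X})})$ (i.e. left multiplication by $A\eta$, resp. $A^*\eta$). $\operatorname{Qut}(\mathbb{X},A)$ is the compact matrix quantum group whose Hopf $*$-algebra is the universal $*$-algebra generated by the entries of a matrix $U$ (its fundamental representation, acting on $\ell^2(\mathbb{X})$) subject to $U$ unitary, $m(U\otimes U)=Um$, $U\eta=\eta$, $UA=AU$. An operator $T$ on $\ell^2(\mathbb{X})$ is an intertwiner of $U$ if $(T\otimes1)U=U(T\otimes1)$. *)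

(* Defs.v *)
From HB Require Import structures.
From mathcomp Require Import all_boot all_order all_algebra.
Set Implicit Arguments. Unset Strict Implicit. Unset Printing Implicit Defensive.
Import Order.TTheory GRing.Theory Num.Theory.
Local Open Scope ring_scope.

(* Coordinates: l^2(X) = C(X) is identified with C^I through a basis
   (e_i)_{i : I} which is ORTHONORMAL for <x,y> = psi(x^* y). *)
Section QuantumSets.
Variables (C : numClosedFieldType) (I : finType).

Definition vec := I -> C.
Definition op := I -> I -> C.

Definition app (T : op) (x : vec) : vec := fun i => \sum_j T i j * x j.
Definition comp (S T : op) : op := fun i k => \sum_j S i j * T j k.
Definition adj (T : op) : op := fun i j => (T j i)^*.
Definition inner (x y : vec) : C := \sum_i (x i)^* * y i.

(* multiplication m : l2 (x) l2 -> l2 with m (e_a (x) e_b) = \sum_c mu c a b e_c *)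
Definition qmul (mu : I -> I -> I -> C) (x y : vec) : vec :=
  fun c => \sum_a \sum_b mu c a b * x a * y b.
Definition qstar (J : op) (x : vec) : vec := fun b => \sum_a J b a * (x a)^*.
Definition qfun (psi : vec) (x : vec) : C := \sum_i psi i * x i.

(* (C^I, qmul, qstar, unit eta) is a finite quantum set with functional psi:
   a unital *-algebra, psi tracial positive, <x,y> = psi(x^* y) (the standard
   inner product in our orthonormal coordinates) and m m^* = id. *)
Definition quantum_set (mu : I -> I -> I -> C) (J : op) (eta psi : vec) : Prop :=
  (forall x y z, qmul mu (qmul mu x y) z = qmul mu x (qmul mu y z)) /\
  (forall x, qmul mu eta x = x /\ qmul mu x eta = x) /\
  (forall x, qstar J (qstar J x) = x) /\
  (forall x y, qstar J (qmul mu x y) = qmul mu (qstar J y) (qstar J x)) /\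
  (forall x y, inner x y = qfun psi (qmul mu (qstar J x) y)) /\
  (forall x y, qfun psi (qmul mu x y) = qfun psi (qmul mu y x)) /\
  (forall x, 0 <= qfun psi (qmul mu (qstar J x) x)) /\
  (* m m^* = id *)
  (forall c d, \sum_a \sum_b mu c a b * (mu d a b)^* = (c == d)%:R).

(* Schur product A . B = m (A (x) B) m^* *)
Definition schur (mu : I -> I -> I -> C) (A B : op) : op :=
  fun c d => \sum_a \sum_b \sum_a' \sum_b'
               mu c a b * A a a' * B b b' * (mu d a' b')^*.

Definition quantum_graph (mu : I -> I -> I -> C) (J : op) (A : op) : Prop :=
  schur mu A A = A /\ (forall x, qstar J (app A (qstar J x)) = app A x).

Definition lmul (mu : I -> I -> I -> C) (v : vec) : op :=
  fun c b => \sum_a mu c a b * v a.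

Definition degree_out (mu : I -> I -> I -> C) (eta : vec) (A : op) : op :=
  lmul mu (app A eta).
Definition degree_in (mu : I -> I -> I -> C) (eta : vec) (A : op) : op :=
  lmul mu (app (adj A) eta).

Definition is_eigenproj (D : op) (l : C) (P : op) : Prop :=
  [/\ comp P P = P, adj P = P &
      forall x, (exists y, x = app P y) <-> app D x = (fun i => l * x i)].

Definition star_alg (B : algType C) (st : B -> B) : Prop :=
  [/\ (forall x, st (st x) = x),
      (forall x y, st (x + y) = st x + st y),
      (forall x y, st (x * y) = st y * st x) &
      (forall (a : C) x, st (a *: x) = a^* *: st x)].

(* u = (u i j) in M_I(B) satisfies the defining relations of Qut(X,A):
   U unitary, m (U (x) U) = U m (with U (x) U = U_13 U_23), U eta = eta,
   U A = A U. *)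
Definition qut_rep (mu : I -> I -> I -> C) (eta : vec) (A : op)
    (B : algType C) (st : B -> B) (u : I -> I -> B) : Prop :=
  [/\ (forall i j, \sum_k u i k * st (u j k) = (i == j)%:R),
      (forall i j, \sum_k st (u k i) * u k j = (i == j)%:R),
      (forall c a' b', \sum_a \sum_b mu c a b *: (u a a' * u b b')
                       = \sum_d mu d a' b' *: u c d),
      (forall a, \sum_b eta b *: u a b = (eta a)%:A) &
      (forall i j, \sum_k A k j *: u i k = \sum_k A i k *: u k j)].

(* (T (x) 1) U = U (T (x) 1) *)
Definition intertwiner (T : op) (B : algType C) (u : I -> I -> B) : Prop :=
  forall i j, \sum_k T i k *: u k j = \sum_k T k j *: u i k.

End QuantumSets.

(* Main.v *)
From Stdlib Require Import FunctionalExtensionality.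
Require Import Defs.
From HB Require Import structures.
From mathcomp Require Import all_boot all_order all_algebra.
Import Order.TTheory GRing.Theory Num.Theory.
Local Open Scope ring_scope.
Set Implicit Arguments. Unset Strict Implicit.

Section LA.
Variables (C : numClosedFieldType) (I : finType).

Lemma sum_ev (F : I -> C) : \sum_b F b = \sum_(k < #|I|) F (enum_val k).
Proof. by rewrite (reindex (@enum_val I I)) //; apply: onW_bij; apply: enum_val_bij. Qed.

Lemma factor (M N : op C I) :
  (forall x, app M x = (fun _ => 0) -> app N x = (fun _ => 0)) ->
  exists R : op C I, N = Defs.comp R M.
Proof.
move=> hker.
pose Mm : 'M[C]_#|I| := \matrix_(i, j) M (enum_val i) (enum_val j).
pose Nm : 'M[C]_#|I| := \matrix_(i, j) N (enum_val i) (enum_val j).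
have sub : (Nm <= Mm)%MS.
  rewrite submxE; apply/eqP/matrixP => i j.
  pose x : vec C I := fun a => cokermx Mm (enum_rank a) j.
  have hx : app M x = (fun _ => 0).
    apply: FunctionalExtensionality.functional_extensionality => a.
    have := congr1 (fun X : 'M_#|I| => X (enum_rank a) j) (mulmx_coker Mm).
    move=> /= h; rewrite mxE in h; rewrite [RHS]mxE in h; rewrite -h /app sum_ev; apply: eq_bigr => k _.
    by rewrite /x enum_valK [Mm _ _]mxE enum_rankK.
  rewrite [RHS]mxE.
  have := congr1 (fun f => f (enum_val i)) (hker x hx) => /= <-.
  rewrite [LHS]mxE /app sum_ev; apply: eq_bigr => k _.
  by rewrite /x enum_valK [Nm _ _]mxE.
exists (fun a b => (Nm *m pinvmx Mm) (enum_rank a) (enum_rank b)).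
apply: FunctionalExtensionality.functional_extensionality => a.
apply: FunctionalExtensionality.functional_extensionality => b.
rewrite /Defs.comp -{1}(enum_rankK a) -{1}(enum_rankK b).
have := congr1 (fun X : 'M_#|I| => X (enum_rank a) (enum_rank b)) (mulmxKpV sub).
rewrite /= !mxE => <-; rewrite sum_ev; apply: eq_bigr => k _.
by rewrite enum_valK [Mm _ _]mxE enum_rankK.
Qed.
End LA.


Section BM.
Variables (C : numClosedFieldType) (I : finType) (B : algType C).
Definition bm := I -> I -> B.
Definition mulB (X Y : bm) : bm := fun i j => \sum_k X i k * Y k j.
Definition sc (T : op C I) : bm := fun i j => (T i j)%:A.
Definition oneB : bm := fun i j => (i == j)%:R.

Ltac fx := apply: functional_extensionality => ?.
Ltac fx2 := let i := fresh "i" in let j := fresh "j" in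
  apply: functional_extensionality => i; apply: functional_extensionality => j.

Lemma mulBA X Y Z : mulB (mulB X Y) Z = mulB X (mulB Y Z).
Proof.
fx2; rewrite /mulB; under eq_bigr do rewrite mulr_suml.
rewrite exchange_big; apply: eq_bigr => k _; rewrite mulr_sumr.
by apply: eq_bigr => m _; rewrite mulrA.
Qed.

Lemma mul1B X : mulB oneB X = X.
Proof.
fx2; rewrite /mulB /oneB (bigD1 i) //= eqxx mul1r big1 ?addr0 // => k.
by rewrite eq_sym => /negbTE ->; rewrite mul0r.
Qed.

Lemma mulB1 X : mulB X oneB = X.
Proof.
fx2; rewrite /mulB /oneB (bigD1 j) //= eqxx mulr1 big1 ?addr0 // => k.
by move=> /negbTE ->; rewrite mulr0.
Qed.

Lemma sc_comp S T : sc (Defs.comp S T) = mulB (sc S) (sc T).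
Proof.
fx2; rewrite /sc /Defs.comp /mulB scaler_suml; apply: eq_bigr => k _.
by rewrite mulr_algl scalerA.
Qed.

Lemma interE (T : op C I) (u : bm) :
  intertwiner T u <-> mulB (sc T) u = mulB u (sc T).
Proof.
have E : mulB (sc T) u = fun i j => \sum_k T i k *: u k j.
  by fx2; apply: eq_bigr => k _; rewrite /sc mulr_algl.
have E' : mulB u (sc T) = fun i j => \sum_k T k j *: u i k.
  by fx2; apply: eq_bigr => k _; rewrite /sc mulr_algr.
rewrite E E'; split => [h|h i j]; first by fx2; apply: h.
by have := congr1 (fun f => f i j) h.
Qed.

Variable st : B -> B.
Hypothesis hst : star_alg st.
Definition stB (X : bm) : bm := fun i j => st (X j i).

Lemma st0 : st 0 = 0.
Proof.
case: hst => _ hD _ _; have h := hD 0 0; rewrite addr0 in h.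
by apply: (addrI (st 0)); rewrite addr0 -h.
Qed.

Lemma st_sum (F : I -> B) : st (\sum_k F k) = \sum_k st (F k).
Proof.
case: hst => _ hD _ _.
apply: (big_ind2 (fun a b => st a = b)) => //; first exact: st0.
by move=> ? ? ? ? <- <-.
Qed.

Lemma st1 : st 1 = 1.
Proof.
case: hst => hK _ hM _.
by have := hM (st 1) 1; rewrite mulr1 hK mulr1 => <-.
Qed.

Lemma st_alg (a : C) : st (a%:A) = (a^*)%:A.
Proof. by case: hst => _ _ _ hZ; rewrite hZ st1. Qed.

Lemma stBK X : stB (stB X) = X.
Proof. by case: hst => hK _ _ _; fx2; rewrite /stB hK. Qed.

Lemma stB_mul X Y : stB (mulB X Y) = mulB (stB Y) (stB X).
Proof.
case: hst => _ _ hM _.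
by fx2; rewrite /stB /mulB st_sum; apply: eq_bigr => k _; rewrite hM.
Qed.

Lemma stB_sc T : stB (sc T) = sc (adj T).
Proof. by fx2; rewrite /stB /sc st_alg. Qed.

Variable u : bm.
Hypothesis hU1 : mulB u (stB u) = oneB.
Hypothesis hU2 : mulB (stB u) u = oneB.

Lemma comm_st T : mulB (sc T) u = mulB u (sc T) ->
  mulB (sc T) (stB u) = mulB (stB u) (sc T).
Proof.
move=> h.
symmetry; rewrite -[LHS]mulB1 -hU1 !mulBA.
rewrite -[mulB (sc T) (mulB u (stB u))]mulBA h mulBA.
by rewrite -[mulB (stB u) (mulB u _)]mulBA hU2 mul1B.
Qed.

Lemma comm_adj T : mulB (sc T) u = mulB u (sc T) ->
  mulB (sc (adj T)) u = mulB u (sc (adj T)).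
Proof.
move=> /comm_st h; have := congr1 stB h.
by rewrite !stB_mul stBK stB_sc => ->.
Qed.

End BM.
Arguments sc {C I B} T.
Arguments oneB {C I B}.


Section Rest.
Variables (C : numClosedFieldType) (I : finType) (B : algType C).
Variable u : I -> I -> B.
Ltac fx2 := let i := fresh "i" in let j := fresh "j" in
  apply: functional_extensionality => i; apply: functional_extensionality => j.

Lemma fix_vec (T : op C I) (eta : vec C I) :
  intertwiner T u ->
  (forall a, \sum_b eta b *: u a b = (eta a)%:A) ->
  forall a, \sum_b app T eta b *: u a b = (app T eta a)%:A.
Proof.
move=> h he a.
rewrite /app; under eq_bigr do rewrite scaler_suml.
rewrite exchange_big.
transitivity (\sum_j eta j *: \sum_b T b j *: u a b).
  apply: eq_bigr => j _; rewrite scaler_sumr; apply: eq_bigr => b _.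
  by rewrite scalerA mulrC.
under eq_bigr => j _ do rewrite -(h a j) scaler_sumr.
rewrite exchange_big scaler_suml; apply: eq_bigr => k _.
transitivity (T a k *: \sum_j eta j *: u k j).
  rewrite scaler_sumr; apply: eq_bigr => j _.
  by rewrite !scalerA mulrC.
by rewrite he scalerA.
Qed.

Lemma lmul_inter (mu : I -> I -> I -> C) (v : vec C I) :
  (forall c a' b', \sum_a \sum_b mu c a b *: (u a a' * u b b')
                       = \sum_d mu d a' b' *: u c d) ->
  (forall a, \sum_b v b *: u a b = (v a)%:A) ->
  intertwiner (lmul mu v) u.
Proof.
move=> hm hv i j; rewrite /lmul.
transitivity (\sum_a \sum_k (mu i a k * v a) *: u k j).
  under eq_bigr do rewrite scaler_suml.
  by rewrite exchange_big.
symmetry.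
under eq_bigr do rewrite scaler_suml.
rewrite exchange_big.
transitivity (\sum_a v a *: \sum_k mu k a j *: u i k).
  apply: eq_bigr => a _; rewrite scaler_sumr; apply: eq_bigr => k _.
  by rewrite scalerA mulrC.
under eq_bigr do rewrite -hm scaler_sumr.
rewrite exchange_big; apply: eq_bigr => a _.
under eq_bigr do rewrite scaler_sumr.
rewrite exchange_big; apply: eq_bigr => k _.
transitivity (mu i a k *: ((\sum_b v b *: u a b) * u k j)).
  rewrite mulr_suml scaler_sumr; apply: eq_bigr => b _.
  by rewrite -scalerAl !scalerA mulrC.
by rewrite hv mulr_algl scalerA.
Qed.

End Rest.


Section Eig.
Variables (C : numClosedFieldType) (I : finType) (B : algType C).
Ltac fx := apply: functional_extensionality => ?.
Ltac fx2 := let i := fresh "i" in let j := fresh "j" in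
  apply: functional_extensionality => i; apply: functional_extensionality => j.

Lemma app_comp (P Q : op C I) y : app P (app Q y) = app (Defs.comp P Q) y.
Proof.
fx; rewrite /app /Defs.comp; under eq_bigr do rewrite mulr_sumr.
rewrite exchange_big; apply: eq_bigr => k _; rewrite mulr_suml.
by apply: eq_bigr => m _; rewrite mulrA.
Qed.

Definition shift (D : op C I) (l : C) : op C I :=
  fun i j => D i j - l * (i == j)%:R.

Lemma app_shift D l x i : app (shift D l) x i = app D x i - l * x i.
Proof.
rewrite /app /shift.
under eq_bigr do rewrite mulrBl.
rewrite sumrB; congr (_ - _).
rewrite (bigD1 i) //= eqxx mulr1 big1 ?addr0 // => k.
by rewrite eq_sym => /negbTE ->; rewrite mulr0 mul0r.
Qed.

Lemma mulB_shiftl D l (W : I -> I -> B) :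
  mulB (sc (shift D l)) W = fun i j => mulB (sc D) W i j - l *: W i j.
Proof.
fx2; rewrite /mulB /sc /shift.
under eq_bigr do rewrite scalerBl mulrBl.
rewrite sumrB; congr (_ - _).
rewrite (bigD1 i) //= eqxx mulr1 big1 ?addr0 ?mulr_algl // => k.
by rewrite eq_sym => /negbTE ->; rewrite mulr0 scale0r mul0r.
Qed.

Lemma mulB_shiftr D l (W : I -> I -> B) :
  mulB W (sc (shift D l)) = fun i j => mulB W (sc D) i j - l *: W i j.
Proof.
fx2; rewrite /mulB /sc /shift.
under eq_bigr do rewrite scalerBl mulrBr.
rewrite sumrB; congr (_ - _).
rewrite (bigD1 j) //= eqxx mulr1 big1 ?addr0 ?mulr_algr // => k.
by move=> /negbTE ->; rewrite mulr0 scale0r mulr0.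
Qed.

Lemma eig_step (W : I -> I -> B) (M P R : op C I) :
  mulB (sc M) W = mulB W (sc M) ->
  Defs.comp M P = (fun _ _ => 0) ->
  (fun i j => (i == j)%:R - P i j) = Defs.comp R M ->
  mulB W (sc P) = mulB (sc P) (mulB W (sc P)).
Proof.
move=> hc hMP hR.
have h0 : mulB (sc M) (mulB W (sc P)) = fun _ _ => 0.
  rewrite -mulBA hc mulBA -sc_comp hMP.
  fx2; rewrite /mulB big1 // => k _; by rewrite /sc scale0r mulr0.
have h1 : mulB (sc (Defs.comp R M)) (mulB W (sc P)) = fun _ _ => 0.
  rewrite sc_comp mulBA h0.
  fx2; rewrite /mulB big1 // => k _; by rewrite mulr0.
rewrite -hR in h1.
fx2; have := congr1 (fun f => f i j) h1; rewrite /= {1}/mulB /sc.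
under eq_bigr do rewrite scalerBl mulrBl.
rewrite sumrB (bigD1 i) //= eqxx big1 ?addr0 ?mulr_algl ?scale1r.
  by move=> /eqP; rewrite subr_eq0 => /eqP ->; apply: eq_bigr => k _.
by move=> k; rewrite eq_sym => /negbTE ->; rewrite scale0r mul0r.
Qed.

End Eig.


Ltac fx2 := let i := fresh "i" in let j := fresh "j" in
  apply: functional_extensionality => i; apply: functional_extensionality => j.

Lemma eig_inter (C : numClosedFieldType) (I : finType) (B : algType C)
  (st : B -> B) (u : I -> I -> B) (D P : op C I) (l : C) :
  star_alg st -> mulB u (stB st u) = oneB -> mulB (stB st u) u = oneB ->
  intertwiner D u -> is_eigenproj D l P -> intertwiner P u.
Proof.
move=> hst U1 U2 hD [hPP hPa hrng].
have cD : mulB (sc D) u = mulB u (sc D) by apply/interE.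
have cM W : mulB (sc D) W = mulB W (sc D) ->
    mulB (sc (shift D l)) W = mulB W (sc (shift D l)).
  by move=> h; rewrite mulB_shiftl mulB_shiftr h.
have hMP : Defs.comp (shift D l) P = fun _ _ => 0.
  fx2; pose x := fun a => P a j.
  have hx : app P (fun a => (a == j)%:R) = x.
    apply: functional_extensionality => a; rewrite /app (bigD1 j) //= eqxx mulr1.
    rewrite big1 ?addr0 // => k /negbTE ->; by rewrite mulr0.
  have := (hrng x).1 (ex_intro _ _ (esym hx)) => hDx.
  have := app_shift D l x i; rewrite hDx subrr => <-.
  by rewrite /Defs.comp /app.
have hker : forall x, app (shift D l) x = (fun _ => 0) ->
    app (fun i j => (i == j)%:R - P i j) x = (fun _ => 0).
  move=> x hx.
  have hDx : app D x = (fun i => l * x i).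
    apply: functional_extensionality => i; apply/eqP; rewrite -subr_eq0.
    by rewrite -app_shift hx.
  have [y hy] := (hrng x).2 hDx.
  have hPx : app P x = x by rewrite hy app_comp hPP.
  apply: functional_extensionality => i.
  rewrite /app; under eq_bigr do rewrite mulrBl.
  rewrite sumrB.
  have -> : \sum_k P i k * x k = x i by rewrite -{2}hPx.
  rewrite (bigD1 i) //= eqxx mul1r big1 ?addr0 ?subrr // => k.
  by rewrite eq_sym => /negbTE ->; rewrite mul0r.
have [R hR] := factor hker.
have s1 := eig_step (cM _ u cD) hMP hR.
have s2 := eig_step (cM _ _ (comm_st U1 U2 cD)) hMP hR.
apply/interE.
have := congr1 (stB st) s2.
by rewrite !(stB_mul hst) (stBK hst) (stB_sc hst) hPa mulBA -s1.
Qed.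

Unset Implicit Arguments.
Theorem proposition2p5 (C : numClosedFieldType) (I : finType)
  (mu : I -> I -> I -> C) (J : op C I) (eta psi : vec C I) (A : op C I) :
  quantum_set mu J eta psi -> quantum_graph mu J A ->
  forall (B : algType C) (st : B -> B) (u : I -> I -> B),
    star_alg st -> qut_rep mu eta A st u ->
    (forall (l : C) (P : op C I),
        is_eigenproj (degree_out mu eta A) l P -> intertwiner P u) /\
    (forall (l : C) (P : op C I),
        is_eigenproj (degree_in mu eta A) l P -> intertwiner P u).
Proof.
move=> _ _ B st u hst [hu1 hu2 hm he hA].
have U1 : mulB u (stB st u) = oneB by fx2; apply: hu1.
have U2 : mulB (stB st u) u = oneB by fx2; apply: hu2.
have iA : intertwiner A u by move=> i j; rewrite hA.
have cA : mulB (sc A) u = mulB u (sc A) by apply/interE.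
have iA' : intertwiner (adj A) u by apply/interE; apply: (comm_adj hst U1 U2 cA).
split => l P; apply: (eig_inter hst U1 U2); apply: lmul_inter => //;
  exact: fix_vec.
Qed.
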